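(* Let $M$ be a matroid on $S$ and $N$ a matroid on $T$ with $S\cap T=\emptyset$, and let $L=M\mathbin{\Box} N$. A set $C\subseteq S\cup T$ is a circuit of $L$ if and only if either $C\subseteq S$ and $C$ is a circuit of $M$, or $C\cap S$ is independent in $M$, the restriction $N|(C\cap T)$ has no isthmus, and $\lambda_M(C\cap S)+1=\nu_N(C\cap T)$.
   Context: For a matroid $M$ on $S$ write $\rho_M$ for rank, $\rho(M)=\rho_M(S)$, $\nu_M(A)=|A|-\rho_M(A)$, $\lambda_M(A)=\rho(M)-\rho_M(A)$. For matroids $M$ on $S$ and $N$ on $T$ with $S\cap T=\emptyset$, the free product $M\mathbin{\Box} N$ is the matroid on $S\cup T$ whose independent sets are those $A$ with $A\cap S$ independent in $M$ and $\lambda_M(A\cap S)\geq\nu_N(A\cap T)$. *)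

(* Defs.v *)
From mathcomp Require Import all_boot.
Set Implicit Arguments. Unset Strict Implicit. Unset Printing Implicit Defensive.

Record matroid (T : finType) := Matroid {
  indep : {set T} -> bool;
  indep0 : indep set0;
  indep_sub : forall A B : {set T}, A \subset B -> indep B -> indep A;
  indep_aug : forall A B : {set T}, indep A -> indep B -> #|A| < #|B| ->
      exists2 x, x \in B :\: A & indep (x |: A)
}.

Definition rank (T : finType) (M : matroid T) (A : {set T}) : nat :=
  \max_(B : {set T} | (B \subset A) && indep M B) #|B|.

Definition mrank (T : finType) (M : matroid T) : nat := rank M setT.

Definition nu (T : finType) (M : matroid T) (A : {set T}) : nat :=
  #|A| - rank M A.

Definition lambda (T : finType) (M : matroid T) (A : {set T}) : nat :=
  mrank M - rank M A.

Definition is_circuit_of (T : finType) (I : {set T} -> bool) (C : {set T}) : Prop :=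
  ~~ I C /\ forall D : {set T}, D \proper C -> I D.

Definition circuit (T : finType) (M : matroid T) (C : {set T}) : Prop :=
  is_circuit_of (indep M) C.

Definition basis_of (T : finType) (M : matroid T) (X B : {set T}) : Prop :=
  [/\ B \subset X, indep M B &
      forall B' : {set T}, B \subset B' -> B' \subset X -> indep M B' -> B' = B].

Definition isthmus_restr (T : finType) (M : matroid T) (X : {set T}) (e : T) : Prop :=
  e \in X /\ forall B, basis_of M X B -> e \in B.

Definition no_isthmus_restr (T : finType) (M : matroid T) (X : {set T}) : Prop :=
  forall e, ~ isthmus_restr M X e.

(* The disjoint union S ∪ T is modelled by the sum type S + T. *)
Definition partS (S T : finType) (A : {set S + T}) : {set S} := inl @^-1: A.
Definition partT (S T : finType) (A : {set S + T}) : {set T} := inr @^-1: A.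

Definition free_product_indep (S T : finType) (M : matroid S) (N : matroid T)
  (A : {set S + T}) : bool :=
  indep M (partS A) && (nu N (partT A) <= lambda M (partS A)).

(* Main.v *)
Require Import Defs.
From mathcomp Require Import all_boot zify.
From Stdlib Require Import Classical.

Section R.
Variables (T : finType) (M : matroid T).

Lemma rank_ex (A : {set T}) : exists2 B : {set T}, (B \subset A) && indep M B & #|B| = rank M A.
Proof.
have h : 0 < #|[pred B : {set T} | (B \subset A) && indep M B]|.
  apply/card_gt0P; exists set0; by rewrite inE sub0set indep0.
have [B HB HE] := eq_bigmax_cond (fun B : {set T} => #|B|) h.
exists B; first by move: HB; rewrite inE.
by rewrite /rank -HE.
Qed.

Lemma rank_ge (A B  : {set T}) : B \subset A -> indep M B -> #|B| <= rank M A.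
Proof. move=> h1 h2; rewrite /rank; exact: (@leq_bigmax_cond _ (fun C : {set T} => (C \subset A) && indep M C) (fun C => #|C|) B (introT andP (conj h1 h2))). Qed.

Lemma rank_le_card (A  : {set T}) : rank M A <= #|A|.
Proof. have [B /andP[h1 _] <-] := rank_ex A; exact: subset_leq_card. Qed.

Lemma rank_indep (A  : {set T}) : indep M A -> rank M A = #|A|.
Proof. move=> h; apply/eqP; rewrite eqn_leq rank_le_card; exact: rank_ge. Qed.

Lemma rank_mono (A B  : {set T}) : A \subset B -> rank M A <= rank M B.
Proof.
move=> sAB; have [C /andP[h1 h2] <-] := rank_ex A; apply: rank_ge h2.
exact: subset_trans sAB.
Qed.

Lemma rank_sub (A B  : {set T}) : A \subset B -> rank M B <= rank M A + #|B :\: A|.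
Proof.
move=> sAB; have [C /andP[h1 h2] <-] := rank_ex B.
rewrite -(cardsID A C); apply: leq_add.
  apply: rank_ge; first exact: subsetIr.
  apply: indep_sub h2; exact: subsetIl.
apply: subset_leq_card; exact: setSD.
Qed.

Lemma basis_rank (X B  : {set T}) : basis_of M X B -> #|B| = rank M X.
Proof.
case=> h1 h2 h3; apply/eqP; rewrite eqn_leq rank_ge //=.
have [C /andP[c1 c2] <-] := rank_ex X.
rewrite leqNgt; apply/negP => lt.
have [x /setDP[xC xB] hx] := indep_aug h2 c2 lt.
have e := h3 (x |: B) (subsetUr _ _).
have : x |: B = B.
  apply: e => //; rewrite subUset h1 andbT sub1set; exact: (subsetP c1).
move/setP/(_ x); rewrite !inE eqxx /= => E; by rewrite -E in xB.
Qed.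

Lemma isthmusP (X : {set T}) e : e \in X -> (~ isthmus_restr M X e <-> rank M (X :\ e) = rank M X).
Proof.
move=> eX; split.
  move=> ni; apply/eqP; rewrite eqn_leq rank_mono ?subsetDl //=.
  have : ~ (forall B, basis_of M X B -> e \in B) by move=> h; apply: ni.
  move=> nb.
  have [B hB eB] : exists2 B, basis_of M X B & e \notin B.
    apply: NNPP => hn; apply: nb => B hB; apply: NNPP => /negP eB.
    apply: hn; by exists B.
  rewrite -(@basis_rank X B hB); case: hB => h1 h2 _; apply: rank_ge => //.
  apply/subsetP => x xB; rewrite !inE (subsetP h1) // andbT.
  by apply: contraNneq eB => <-.
move=> eq [_ hb].
have [B /andP[b1 b2] bE] := rank_ex (X :\ e).
have hB : basis_of M X B.
  split => //; first exact: subset_trans b1 (subsetDl _ _).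
  move=> B' s1 s2 i2; apply/eqP; rewrite eq_sym eqEcard s1 /=.
  by rewrite bE eq; apply: rank_ge.
have := hb B hB; move/(subsetP b1); by rewrite !inE eqxx.
Qed.

Lemma rank_del (A : {set T}) t : t \in A -> rank M A <= rank M (A :\ t) + 1.
Proof.
move=> tA; apply: leq_trans (@rank_sub (A :\ t) A (subsetDl A [set t])) _.
rewrite leq_add2l -(cards1 t); apply: subset_leq_card.
apply/subsetP => x; rewrite !inE; case: (x == t) => //=; by case: (x \in A).
Qed.

Lemma nu_mono (A B : {set T}) : A \subset B -> nu M A <= nu M B.
Proof.
move=> sAB; rewrite /nu.
have h1 := rank_sub _ _ sAB; have h2 := cardsID A B.
rewrite (setIidPr sAB) in h2.
have h3 := rank_le_card A; have h4 := rank_le_card B. lia.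
Qed.
End R.
Arguments rank_mono {T} M {A B}.
Arguments rank_le_card {T} M A.
Arguments isthmusP {T} M {X e}.
Arguments rank_del {T} M {A t}.
Arguments nu_mono {T} M {A B}.
Arguments rank_indep {T M A}.

Theorem proposition3p7 (S T : finType) (M : matroid S) (N : matroid T)
  (C : {set S + T}) :
  is_circuit_of (free_product_indep M N) C <->
  ((C \subset [set inl x | x : S]) /\ circuit M (partS C))
  \/ [/\ indep M (partS C), no_isthmus_restr N (partT C) &
         lambda M (partS C) + 1 = nu N (partT C)].
Proof.
have hmr : forall A, rank M A <= mrank M.
  move=> A; apply: rank_mono; exact: subsetT.
split.
- move=> [dep min].
  case: (boolP (partT C == set0)) => [/eqP CT0 | CTn].
  + left; split.
      apply/subsetP => -[s|t] h; first by apply/imsetP; exists s.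
      have : t \in partT C by rewrite inE.
      by rewrite CT0 inE.
    split.
      move: dep; rewrite /free_product_indep CT0 /nu cards0 sub0n /=.
      by rewrite andbT.
    move=> E /properP [sE [s sC sE']].
    pose D := [set x in C | if x is inl s then s \in E else false].
    have pD : partS D = E.
      apply/setP => y; rewrite !inE; case yE: (y \in E); rewrite ?andbT ?andbF //.
      by move/subsetP: sE => /(_ y yE); rewrite inE.
    have : free_product_indep M N D.
      apply: min; apply/properP; split.
        by apply/subsetP => x; rewrite inE => /andP[].
      exists (inl s); first by move: sC; rewrite inE.
      by rewrite inE (negbTE sE') andbF.
    by rewrite /free_product_indep pD => /andP[].
  + right; case/set0Pn: CTn => t0 t0C.
    have Ci : indep M (partS C).
      pose D := [set x in C | if x is inl _ then true else false].
      have : free_product_indep M N D.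
        apply: min; apply/properP; split.
          by apply/subsetP => x; rewrite inE => /andP[].
        exists (inr t0); first by move: t0C; rewrite inE.
        by rewrite inE andbF.
      rewrite /free_product_indep.
      have -> : partS D = partS C by apply/setP => y; rewrite !inE andbT.
      by case/andP.
    have hnu : ~~ (nu N (partT C) <= lambda M (partS C)).
      by move: dep; rewrite /free_product_indep Ci.
    have hrem : forall t, t \in partT C -> nu N (partT C :\ t) <= lambda M (partS C).
      move=> t tC.
      have : free_product_indep M N (C :\ inr t).
        apply: min; apply/properP; split; first exact: subsetDl.
        exists (inr t); first by move: tC; rewrite inE.
        by rewrite !inE eqxx.
      rewrite /free_product_indep.
      have -> : partS (C :\ inr t) = partS C by apply/setP => y; rewrite !inE.
      have -> : partT (C :\ inr t) = partT C :\ t by apply/setP => y; rewrite !inE.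
      by case/andP.
    have cnt : forall t, t \in partT C -> #|partT C| = (#|partT C :\ t|).+1.
      by move=> t tC; rewrite (cardsD1 t) tC.
    have eqn : lambda M (partS C) + 1 = nu N (partT C).
      have := hrem t0 t0C; have := rank_del N t0C; have := cnt t0 t0C.
      have := rank_le_card N (partT C :\ t0).
      have := rank_mono N (subsetDl (partT C) [set t0]).
      move: hnu; rewrite /nu; lia.
    split => // e [eC hB].
    have : ~ isthmus_restr N (partT C) e.
      apply/(isthmusP N eC); apply/eqP; rewrite eqn_leq rank_mono ?subsetDl //=.
      have := hrem e eC; have := cnt e eC; move: eqn.
      have := rank_le_card N (partT C :\ e); have := rank_le_card N (partT C).
      rewrite /nu; lia.
    by move=> h; apply: h; split.
- case => [[sub [cd cmin]] | [Ci noi eq]].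
  + split; first by rewrite /free_product_indep negb_and cd.
    move=> D /properP [sDC [x xC xD]].
    have DT : partT D = set0.
      apply/setP => y; rewrite !inE; apply/negP => yD.
      have := subsetP (subset_trans sDC sub) _ yD; by case/imsetP.
    have : indep M (partS D).
      apply: cmin; apply/properP; split.
        by apply/subsetP => y; rewrite !inE; apply: (subsetP sDC).
      case/imsetP: (subsetP sub _ xC) => s _ xs; subst x.
      by exists s; rewrite inE.
    by rewrite /free_product_indep DT /nu cards0 sub0n => ->.
  + split; first by rewrite /free_product_indep Ci -eq addn1 ltnn andbF.
    move=> D /properP [sDC [x xC xD]].
    have sS : partS D \subset partS C.
      by apply/subsetP => y; rewrite !inE; apply: (subsetP sDC).
    have sT : partT D \subset partT C.
      by apply/subsetP => y; rewrite !inE; apply: (subsetP sDC).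
    rewrite /free_product_indep (indep_sub sS Ci) /=.
    have Di := indep_sub sS Ci.
    case: x xC xD => [s|t] xC xD.
    * have lt : #|partS D| < #|partS C|.
        apply: proper_card; apply/properP; split => //.
        by exists s; rewrite inE.
      have := nu_mono N sT; have := hmr (partS C); move: eq.
      rewrite /lambda (rank_indep Di) (rank_indep Ci); lia.
    * have tC : t \in partT C by rewrite inE.
      have sT' : partT D \subset partT C :\ t.
        apply/subsetP => y yD; rewrite in_setD1 (subsetP sT _ yD) andbT.
        by apply: contraNneq xD => <-; move: yD; rewrite inE.
      have rr := (isthmusP N tC).1 (noi t).
      have := nu_mono N sT'; have := rank_mono M sS; move: eq.
      have := rank_le_card N (partT C).
      have cd := cardsD1 t (partT C); rewrite tC /= in cd.
      have := hmr (partS C); have := hmr (partS D).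
      rewrite /lambda /nu rr; lia.
Qed.
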